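(* Let $A$ be a one-dimensional integral domain. Every overring of $A$ that is finitely generated as an $A$-algebra, flat over $A$, and well-centered on $A$ is a localization of $A$.
   Context: An overring of $A$ is a subring of the field of fractions of $A$ containing $A$. $B$ is well-centered on $A$ if for each $b\in B$ there is a unit $u$ of $B$ with $ub\in A$. $B$ is a localization of $A$ if $B=S^{-1}A$ for a multiplicatively closed set $S$ of nonzero elements of $A$. *)

(* Defs.v *)
From HB Require Import structures.
From mathcomp Require Import all_boot all_order all_algebra.
Set Implicit Arguments. Unset Strict Implicit. Unset Printing Implicit Defensive.
Import Order.TTheory GRing.Theory Num.Theory.
Local Open Scope ring_scope.

Section Defs.
Variable A : idomainType.
Local Notation K := {fraction A}.
Local Notation "x %:F" := (@tofrac A x).

Definition prime_ideal (P : A -> Prop) : Prop :=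
  [/\ P 0,
      (forall x y, P x -> P y -> P (x + y)),
      (forall a x, P x -> P (a * x)),
      ~ P 1 &
      (forall x y, P (x * y) -> P x \/ P y)].

Definition strict_incl (P Q : A -> Prop) : Prop :=
  (forall x, P x -> Q x) /\ exists x, Q x /\ ~ P x.

Definition krull_dim_one : Prop :=
  (exists P Q, [/\ prime_ideal P, prime_ideal Q & strict_incl P Q]) /\
  ~ (exists P Q R, [/\ prime_ideal P, prime_ideal Q, prime_ideal R,
                      strict_incl P Q & strict_incl Q R]).

Definition inA (x : K) : Prop := exists a : A, x = a%:F.

Definition subring (B : K -> Prop) : Prop :=
  [/\ B 1,
      (forall x y, B x -> B y -> B (x - y)) &
      (forall x y, B x -> B y -> B (x * y))].

Definition overring (B : K -> Prop) : Prop :=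
  subring B /\ (forall a : A, B a%:F).

(* B is finitely generated as an A-algebra: there is a finite family s in B
   such that B is the A-subalgebra of K generated by s, i.e. B is contained
   in every subring of K containing A and s. *)
Definition fg_algebra (B : K -> Prop) : Prop :=
  exists s : seq K, (forall x, x \in s -> B x) /\
    forall S : K -> Prop, subring S -> (forall a : A, S a%:F) ->
      (forall x, x \in s -> S x) -> forall b, B b -> S b.

(* B is flat over A, via the equational criterion of flatness. *)
Definition flat_over (B : K -> Prop) : Prop :=
  forall (n : nat) (a : 'I_n -> A) (x : 'I_n -> K),
    (forall i, B (x i)) -> \sum_i (a i)%:F * x i = 0 ->
    exists (m : nat) (c : 'I_n -> 'I_m -> A) (y : 'I_m -> K),
      [/\ (forall j, B (y j)),
          (forall i, x i = \sum_j (c i j)%:F * y j) &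
          (forall j, \sum_i a i * c i j = 0)].

Definition unit_of (B : K -> Prop) (u : K) : Prop :=
  B u /\ exists v, B v /\ u * v = 1.

Definition well_centered (B : K -> Prop) : Prop :=
  forall b, B b -> exists u, unit_of B u /\ inA (u * b).

Definition mult_closed_nonzero (S : A -> Prop) : Prop :=
  [/\ S 1, (forall s t, S s -> S t -> S (s * t)) & (forall s, S s -> s != 0)].

Definition is_localization (B : K -> Prop) : Prop :=
  exists S : A -> Prop, mult_closed_nonzero S /\
    forall x : K, B x <-> exists a s, S s /\ x = a%:F / s%:F.

End Defs.

(* Main.v *)
Require Import Defs.
From mathcomp Require Import all_boot all_order all_algebra.
From mathcomp Require classical_sets.
From Stdlib Require Import Classical_Prop.
From mathcomp Require Import ring.
Set Implicit Arguments. Unset Strict Implicit. Unset Printing Implicit Defensive.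
Import Order.TTheory GRing.Theory Num.Theory.
Local Open Scope ring_scope.
Local Notation "x %:F" := (@tofrac _ x).
From mathcomp Require Import generic_quotient.


Definition ideal {A : idomainType} (X : A -> Prop) := [/\ X 0, (forall x y, X x -> X y -> X (x + y)) &
  (forall a x, X x -> X (a * x))].
Definition multset {A : idomainType} (T : A -> Prop) := T 1 /\ forall x y, T x -> T y -> T (x * y).

Lemma exists_prime {A : idomainType} (J T : A -> Prop) : ideal J -> multset T ->
  (forall x, J x -> T x -> False) ->
  exists P, [/\ prime_ideal P, (forall x, J x -> P x) & (forall x, P x -> T x -> False)].
Proof.
move=> [J0 JD JM] [T1 TM] JT.
pose Pp (X : A -> Prop) := ideal (fun a => J a \/ X a) /\
  (forall x, J x \/ X x -> T x -> False).
have [|M0 [[[Mz0 MD MM] MT] Mmax]] := @classical_sets.Zorn_bigcup A Pp.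
  move=> F FP Ftot; rewrite /classical_sets.bigcup /=; split; last first.
    move=> x [/JT //|[X FX Xx]]; have [_ XT] := FP X FX; apply: XT; by right.
  split; first by left.
  - move=> x y [Jx|[X FX Xx]] [Jy|[Y FY Yy]].
    + by left; apply: JD.
    + have [[_ YD _] _] := FP Y FY.
      have [?|?] := YD x y (or_introl Jx) (or_intror Yy); [by left|by right; exists Y].
    + have [[_ XD _] _] := FP X FX.
      have [?|?] := XD x y (or_intror Xx) (or_introl Jy); [by left|by right; exists X].
    + have [XY|YX] := Ftot X Y FX FY.
      * have [[_ YD _] _] := FP Y FY.
        have [?|?] := YD x y (or_intror (XY x Xx)) (or_intror Yy); [by left|by right; exists Y].
      * have [[_ XD _] _] := FP X FX.
        have [?|?] := XD x y (or_intror Xx) (or_intror (YX y Yy)); [by left|by right; exists X].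
  - move=> a x [Jx|[X FX Xx]]; first by left; apply: JM.
    have [[_ _ XM] _] := FP X FX.
    have [?|?] := XM a x (or_intror Xx); [by left|by right; exists X].
pose M a := J a \/ M0 a.
have notM1 : ~ M 1 by move=> H; exact: MT _ H T1.
have step : forall x, ~ M x -> exists m r, M m /\ T (m + x * r).
  move=> x nMx.
  pose Y z := exists m r, M m /\ z = m + x * r.
  have MY : forall z, M z -> Y z by move=> z Mz; exists z, 0; rewrite mulr0 addr0.
  have: ~ Pp Y.
    apply: Mmax; split; first by move=> z Mz; apply: MY; right.
    move=> H; apply: nMx; right; apply: H; exists 0, 1; split; first by left.
    by rewrite add0r mulr1.
  rewrite /Pp => nP.
  apply: NNPP => nE; apply: nP; split; last first.
    move=> z [Jz|[m [r [Mm ->]]]] Tz; first exact: JT Jz Tz.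
    by apply: nE; exists m, r.
  split.
  - by right; apply: MY; left.
  - move=> u v Hu Hv; right.
    have {Hu} [m1 [r1 [M1 ->]]] : Y u by case: Hu => // /(or_introl (B:= M0 u)) /MY.
    have {Hv} [m2 [r2 [M2 ->]]] : Y v by case: Hv => // /(or_introl (B:= M0 v)) /MY.
    exists (m1 + m2), (r1 + r2); split; last by rewrite mulrDr addrACA.
    exact: MD.
  - move=> a u Hu; right.
    have {Hu} [m1 [r1 [M1 ->]]] : Y u by case: Hu => // /(or_introl (B:= M0 u)) /MY.
    exists (a * m1), (a * r1); split; last by rewrite mulrDr mulrCA.
    exact: MM.
exists M; split; [|by move=> x Jx; left|by move=> x Mx Tx; exact: MT Mx Tx].
split => //.
move=> x y Mxy; apply: NNPP => nxy.
have nx : ~ M x by move=> ?; apply: nxy; left.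
have ny : ~ M y by move=> ?; apply: nxy; right.
have [m1 [r1 [M1 T1']]] := step x nx.
have [m2 [r2 [M2 T2']]] := step y ny.
apply: (MT _ _ (TM _ _ T1' T2')).
have -> : (m1 + x * r1) * (m2 + y * r2) =
  m1 * (m2 + y * r2) + (m2 * (x * r1) + (r1 * r2) * (x * y)).
  by ring.
apply: (MD); first by rewrite mulrC; apply: (MM).
apply: (MD); [rewrite mulrC; exact: (MM) | exact: MM].
Qed.
Lemma prime0 {A : idomainType} : prime_ideal (fun z : A => z = 0).
Proof.
split => //.
- by move=> x y -> ->; rewrite addr0.
- by move=> a x ->; rewrite mulr0.
- by move/eqP; rewrite oner_eq0.
- by move=> x y /eqP; rewrite mulf_eq0 => /orP[/eqP|/eqP]; [left|right].
Qed.

Lemma pi_reg {A : idomainType} (dim : krull_dim_one A) (t : A) (t0 : t != 0) (x : A) :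
  exists n r q, x ^+ n - x ^+ n.+1 * r = t * q.
Proof.
apply: NNPP => nE.
pose J z := exists q, z = t * q.
pose T z := exists n r, z = x ^+ n * (1 - x * r).
have [P [PP JP PT]] : exists P, [/\ prime_ideal P, (forall z, J z -> P z) &
    (forall z, P z -> T z -> False)].
  apply: exists_prime.
  - split; first by exists 0; rewrite mulr0.
    + by move=> u v [q1 ->] [q2 ->]; exists (q1 + q2); rewrite mulrDr.
    + by move=> a u [q1 ->]; exists (a * q1); rewrite mulrCA.
  - split; first by exists 0%N, 0; rewrite expr0 mulr0 subr0 mulr1.
    move=> u v [n [r ->]] [m [s ->]].
    exists (n + m)%N, (r + s - x * r * s); rewrite exprD; ring.
  - move=> z [q ->] [n [r E]]; apply: nE; exists n, r, q.
    by rewrite E exprS; ring.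
have [P0 PD PM P1 Pprime] := PP.
have nPx : ~ P x.
  by move=> Px; apply: (PT x Px); exists 1%N, 0; rewrite mulr0 subr0 mulr1 expr1.
have [[p [r [Pp E]]]|nJ] := classic (exists p r, P p /\ 1 = p + x * r).
  apply: (PT p Pp); exists 0%N, r; rewrite expr0 mul1r E; ring.
pose J' z := exists p r, P p /\ z = p + x * r.
have [Q [QQ J'Q _]] : exists Q, [/\ prime_ideal Q, (forall z, J' z -> Q z) &
    (forall z, Q z -> z = 1 -> False)].
  apply: exists_prime.
  - split; first by exists 0, 0; rewrite mulr0 addr0.
    + move=> u v [p1 [r1 [P1' ->]]] [p2 [r2 [P2' ->]]].
      by exists (p1 + p2), (r1 + r2); split; [exact: PD | ring].
    + move=> a u [p1 [r1 [P1' ->]]].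
      by exists (a * p1), (a * r1); split; [exact: PM | ring].
  - by split => // u v -> ->; rewrite mulr1.
  - by move=> z [p [r [Pp ->]]] E; apply: nJ; exists p, r.
case: dim => _; apply; exists (fun z => z = 0), P, Q; split => //.
- exact: prime0.
- split; first by move=> z ->.
  by exists t; split; [apply: JP; exists 1; rewrite mulr1 | apply/eqP].
- split; first by move=> z Pz; apply: J'Q; exists z, 0; rewrite mulr0 addr0.
  by exists x; split => //; apply: J'Q; exists 0, 1; split => //; rewrite add0r mulr1.
Qed.



Lemma frac_repr (A : idomainType) (x : {fraction A}) :
  exists n d : A, d != 0 /\ x * d%:F = n%:F.
Proof.
elim/quotW: x => r.
exists r.1, r.2; split; first exact: denom_ratioP.
change (FracField.mul (\pi_(FracField.type A) r)%qT (FracField.tofrac r.2) = FracField.tofrac r.1).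
rewrite !piE.
apply/eqmodP; rewrite /= FracField.equivfE.
rewrite /FracField.mulf !numden_Ratio ?(oner_eq0, mulf_neq0, denom_ratioP) // !mulr1 mulrC.
exact: eqxx. Qed.



Definition tdiv {A : idomainType} (t z : A) := exists q, z = t * q.

Lemma tdivD {A : idomainType} (t x y : A) : tdiv t x -> tdiv t y -> tdiv t (x + y).
Proof. by move=> [q1 ->] [q2 ->]; exists (q1 + q2); rewrite mulrDr. Qed.

Lemma tdivM {A : idomainType} (t a x : A) : tdiv t x -> tdiv t (a * x).
Proof. by move=> [q1 ->]; exists (a * q1); rewrite mulrCA. Qed.

Lemma pi_reg_mono {A : idomainType} (t h r : A) n M :
  tdiv t (h ^+ n - h ^+ n.+1 * r) -> (n <= M)%N -> tdiv t (h ^+ M - h ^+ M.+1 * r).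
Proof.
move=> H /subnK <-; have := tdivM (h ^+ (M - n)) H.
congr tdiv; rewrite -addnS !exprD; ring.
Qed.

Lemma pi_reg_idem {A : idomainType} (t h r : A) N :
  tdiv t (h ^+ N - h ^+ N.+1 * r) -> tdiv t (h ^+ N - h ^+ (N + N) * r ^+ N).
Proof.
move=> H.
suff: forall k, tdiv t (h ^+ N - h ^+ (N + k) * r ^+ k) by apply.
elim=> [|k IH]; first by rewrite addn0 expr0 mulr1 subrr; exists 0; rewrite mulr0.
have := tdivD IH (tdivM (h ^+ k * r ^+ k) H).
by congr tdiv; rewrite addnS !exprS exprD; ring.
Qed.

Lemma uniformN {A : idomainType} (dim : krull_dim_one A) (t : A) (t0 : t != 0)
  (hs : seq A) : exists N, (0 < N)%N /\
  forall h, h \in hs -> exists r, tdiv t (h ^+ N - h ^+ N.+1 * r).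
Proof.
elim: hs => [|h hs [N [N0 IH]]]; first by exists 1%N.
have [n [r [q E]]] := pi_reg dim t0 h.
exists (maxn N n); split; first by rewrite leq_max N0.
move=> x; rewrite inE => /orP[/eqP ->|xin].
  by exists r; apply: (pi_reg_mono (n := n)); [exists q | rewrite leq_maxr].
have [r' Hr'] := IH x xin.
by exists r'; apply: (pi_reg_mono Hr'); rewrite leq_maxl.
Qed.

Lemma prime_pow {A : idomainType} (Q : A -> Prop) (h : A) n :
  prime_ideal Q -> ~ Q h -> ~ Q (h ^+ n).
Proof.
move=> [_ _ _ Q1 Qp] nh; elim: n => [|n IH]; first by rewrite expr0.
by rewrite exprS => /Qp [].
Qed.

Lemma g_exists {A : idomainType} (t : A) N (hs : seq A) : (0 < N)%N ->
  (forall h, h \in hs -> exists r, tdiv t (h ^+ N - h ^+ N.+1 * r)) ->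
  exists g, (forall h, h \in hs -> tdiv t (g * h ^+ N)) /\
    (forall Q, prime_ideal Q -> (forall h, h \in hs -> Q h) -> ~ Q g).
Proof.
move=> N0; elim: hs => [|h hs IH] H.
  exists 1; split => // Q [_ _ _ Q1 _] _; exact: Q1.
have [g [g1 g2]] : exists g, (forall h, h \in hs -> tdiv t (g * h ^+ N)) /\
    (forall Q, prime_ideal Q -> (forall h, h \in hs -> Q h) -> ~ Q g).
  by apply: IH => x xin; apply: H; rewrite inE xin orbT.
have [r Hr] := H h (mem_head _ _).
have Hi := pi_reg_idem Hr.
exists (g * (1 - h ^+ N * r ^+ N)); split.
  move=> x; rewrite inE => /orP[/eqP ->|xin].
    by have := tdivM g Hi; congr tdiv; rewrite exprD; ring.
  by have := tdivM (1 - h ^+ N * r ^+ N) (g1 x xin); congr tdiv; ring.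
move=> Q QP Qall; have [Q0 QD QM Q1 Qp] := QP.
move=> /Qp [|]; first by apply: g2 => // x xin; apply: Qall; rewrite inE xin orbT.
move=> Hf; apply: Q1.
have Qf : Q (h ^+ N * r ^+ N).
  rewrite mulrC; apply: (QM); rewrite -(prednK N0) exprSr; apply: (QM).
  by apply: Qall; exact: mem_head.
by have := QD _ _ Hf Qf; rewrite subrK.
Qed.

Section BLemmas.

Lemma B0 {A : idomainType} (B : {fraction A} -> Prop) : subring B -> B 0.
Proof. by move=> [B1 BB _]; rewrite -(subrr 1); apply: BB. Qed.

Lemma BN {A : idomainType} (B : {fraction A} -> Prop) x : subring B -> B x -> B (- x).
Proof. by move=> SB Bx; rewrite -sub0r; case: (SB) => _ BB _; apply: BB => //; exact: B0. Qed.

Lemma BD {A : idomainType} (B : {fraction A} -> Prop) x y :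
  subring B -> B x -> B y -> B (x + y).
Proof. by move=> SB Bx By; rewrite -[y]opprK; case: (SB) => _ BB _; apply: BB => //; exact: BN. Qed.

Lemma BM {A : idomainType} (B : {fraction A} -> Prop) x y :
  subring B -> B x -> B y -> B (x * y).
Proof. by move=> [_ _ BB]; apply: BB. Qed.

Lemma Bsum {A : idomainType} (B : {fraction A} -> Prop) (I : eqType) (r : seq I) F :
  subring B -> (forall i, i \in r -> B (F i)) -> B (\sum_(i <- r) F i).
Proof.
move=> SB H; rewrite big_seq; apply: (big_ind B); [exact: B0 | move=> *; exact: BD | ].
exact: H.
Qed.

Lemma flat1 {A : idomainType} (B : {fraction A} -> Prop) x :
  flat_over B -> subring B -> B x ->
  exists r : seq (A * {fraction A}),
    (forall p, p \in r -> B p.2 /\ inA (p.1%:F * x)) /\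
    1 = \sum_(p <- r) p.1%:F * p.2.
Proof.
move=> Hf SB Bx.
have [n [d [d0 E]]] := frac_repr x.
pose a (i : 'I_2) := if val i == 0%N then d else - n.
pose xx (i : 'I_2) := if val i == 0%N then x else 1.
have Bxx : forall i, B (xx i) by move=> i; rewrite /xx; case: ifP => _ //; case: SB.
have Sum : \sum_i (a i)%:F * xx i = 0.
  rewrite big_ord_recl big_ord1 /a /xx /= rmorphN /= -E; ring.
have [m [c [y [By Ex Ec]]]] := Hf 2%N a xx Bxx Sum.
exists [seq (c (lift ord0 ord0) j, y j) | j <- enum 'I_m]; split.
  move=> p /mapP [j _ ->] /=; split => //.
  exists (c ord0 j).
  have := Ec j; rewrite big_ord_recl big_ord1 /a /= => /eqP.
  rewrite addr_eq0 mulNr opprK => /eqP Ej.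
  apply: (mulIf (x := d%:F)); first by rewrite tofrac_eq0.
  by rewrite -mulrA E -!rmorphM /= [c ord0 j * d]mulrC Ej mulrC.
rewrite big_map big_enum /=.
by have := Ex (lift ord0 ord0); rewrite /xx /=.
Qed.

End BLemmas.

Lemma family {A : idomainType} (B : {fraction A} -> Prop) (s : seq {fraction A}) :
  flat_over B -> subring B -> (forall x, x \in s -> B x) ->
  exists r : seq (A * {fraction A}),
    (forall p, p \in r -> B p.2 /\ forall x, x \in s -> inA (p.1%:F * x)) /\
    1 = \sum_(p <- r) p.1%:F * p.2.
Proof.
move=> Hf SB; elim: s => [|x s IH] Hs.
  exists [:: (1, 1)]; split; last by rewrite big_seq1 /= rmorph1 mulr1.
  by move=> p; rewrite inE => /eqP -> /=; split => //; case: SB.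
have [r1 [r1P r1S]] : exists r : seq (A * {fraction A}),
    (forall p, p \in r -> B p.2 /\ forall x, x \in s -> inA (p.1%:F * x)) /\
    1 = \sum_(p <- r) p.1%:F * p.2.
  by apply: IH => y ys; apply: Hs; rewrite inE ys orbT.
have [r2 [r2P r2S]] := flat1 Hf SB (Hs x (mem_head _ _)).
exists [seq (p.1 * q.1, p.2 * q.2) | p <- r1, q <- r2]; split.
  move=> z /allpairsP [[p q] [pin qin ->]] /=.
  have [Bp Ip] := r1P p pin; have [Bq Iq] := r2P q qin.
  split; first exact: BM.
  move=> y; rewrite inE => /orP [/eqP ->|yin].
    have [a Ea] := Iq; exists (p.1 * a).
    by rewrite rmorphM /= -mulrA Ea rmorphM.
  have [a Ea] := Ip y yin; exists (q.1 * a).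
  by rewrite rmorphM /= mulrAC Ea rmorphM mulrC.
rewrite big_allpairs_dep /= r1S; apply: eq_bigr => p _.
rewrite -[LHS]mulr1 r2S mulr_sumr; apply: eq_bigr => q _.
by rewrite rmorphM /=; ring.
Qed.

Lemma loc_fg {A : idomainType} (B : {fraction A} -> Prop) (s : seq {fraction A}) (h : A) :
  (forall S : {fraction A} -> Prop, subring S -> (forall a : A, S a%:F) ->
      (forall x, x \in s -> S x) -> forall b, B b -> S b) ->
  (forall x, x \in s -> inA (h%:F * x)) ->
  forall b, B b -> exists N, inA ((h ^+ N)%:F * b).
Proof.
move=> Hg Hs; apply: Hg.
- split.
  + by exists 0%N, 1; rewrite expr0 rmorph1 mulr1.
  + move=> x y [N1 [a1 E1]] [N2 [a2 E2]]; exists (N1 + N2)%N, (h ^+ N2 * a1 - h ^+ N1 * a2).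
    rewrite rmorphB !rmorphM /= -E1 -E2 !rmorphXn /= exprD; ring.
  + move=> x y [N1 [a1 E1]] [N2 [a2 E2]]; exists (N1 + N2)%N, (a1 * a2).
    rewrite rmorphM /= -E1 -E2 !rmorphXn /= exprD; ring.
- by move=> a; exists 0%N, a; rewrite expr0 rmorph1 mul1r.
- by move=> x xs; exists 1%N; rewrite expr1; apply: Hs.
Qed.

Lemma Bpow {A : idomainType} (B : {fraction A} -> Prop) x N :
  subring B -> B x -> B (x ^+ N).
Proof.
move=> SB Bx; elim: N => [|N IH]; first by rewrite expr0; case: SB.
by rewrite exprS; apply: BM.
Qed.

Lemma pow2 {A : idomainType} (B : {fraction A} -> Prop) (x a c : {fraction A}) :
  subring B -> B x -> B a -> B c -> 1 = x * a + c ->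
  forall N, exists a' c', [/\ B a', B c' & 1 = x ^+ N * a' + c * c'].
Proof.
move=> SB Bx Ba Bc E; elim=> [|N [a' [c' [Ba' Bc' E']]]].
  by exists 1, 0; split; [case: SB | exact: B0 | rewrite expr0 mulr1 mulr0 addr0].
exists (a' * a), (x ^+ N * a' + c' * x * a + c' * c); split.
- exact: BM.
- apply: (BD SB); last exact: (BM SB).
  apply: (BD SB); first by apply: (BM SB) => //; exact: Bpow.
  by apply: (BM SB) => //; exact: (BM SB).
- have -> : 1 = (x ^+ N * a' + c * c') * (x * a + c) by rewrite -E' -E mulr1.
  rewrite exprS; ring.
Qed.

Lemma powseq {A : idomainType} (B : {fraction A} -> Prop) N : subring B ->
  (forall a : A, B a%:F) ->
  forall (hs : seq A) (r : seq (A * {fraction A})), map fst r = hs ->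
  (forall p, p \in r -> B p.2) -> forall c, B c ->
  1 = c + \sum_(p <- r) p.1%:F * p.2 ->
  exists c' (r' : seq (A * {fraction A})), [/\ B c',
    (forall p, p \in r' -> p.1 \in hs /\ B p.2) &
    1 = c * c' + \sum_(p <- r') (p.1%:F) ^+ N * p.2].
Proof.
move=> SB HA; elim=> [|h hs IH] [|p r0] //=.
  move=> _ _ c Bc; rewrite big_nil addr0 => E.
  by exists 1, [::]; split => //; [case: SB | rewrite big_nil addr0 mulr1].
case=> Ep Er0 Br c Bc; rewrite big_cons => E.
have Bp2 : B p.2 by apply: Br; exact: mem_head.
have Br0 : forall q, q \in r0 -> B q.2 by move=> q qin; apply: Br; rewrite inE qin orbT.
pose c1 := c + \sum_(q <- r0) q.1%:F * q.2.
have Bc1 : B c1.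
  apply: (BD SB) => //; apply: (Bsum SB) => q qin; apply: (BM SB) => //; exact: Br0.
have E1 : 1 = p.1%:F * p.2 + c1 by rewrite E /c1; ring.
have [a' [c'' [Ba' Bc'' E2]]] := pow2 SB (HA p.1) Bp2 Bc1 E1 N.
pose r0' := [seq (q.1, q.2 * c'') | q <- r0].
have Er0' : map fst r0' = hs by rewrite -map_comp.
have Br0' : forall q, q \in r0' -> B q.2.
  by move=> q /mapP [q0 q0in ->] /=; apply: (BM SB) => //; exact: Br0.
have Bnc : B (p.1%:F ^+ N * a' + c * c'').
  by apply: (BD SB); apply: (BM SB) => //; exact: Bpow.
have E3 : 1 = (p.1%:F ^+ N * a' + c * c'') + \sum_(q <- r0') q.1%:F * q.2.
  rewrite big_map /= E2 /c1 mulrDl mulr_suml.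
  by under [in RHS]eq_bigr do rewrite mulrA; rewrite addrA.
have [c3 [r3 [Bc3 r3P E4]]] := IH r0' Er0' Br0' _ Bnc E3.
exists (c'' * c3), ((p.1, a' * c3) :: r3); split.
- exact: (BM SB).
- move=> q; rewrite inE => /orP [/eqP -> /=|qin].
    by rewrite -Ep mem_head; split => //; exact: (BM SB).
  by have [hin Bq] := r3P q qin; rewrite inE hin orbT.
- by rewrite big_cons /= E4; ring.
Qed.

Lemma local_global {A : idomainType} (x : {fraction A}) :
  (forall Q, prime_ideal Q -> exists s, ~ Q s /\ inA (s%:F * x)) -> inA x.
Proof.
move=> H; apply: NNPP => nx.
pose D z := inA (z%:F * x).
have [Q [QP DQ _]] : exists Q, [/\ prime_ideal Q, (forall z, D z -> Q z) &
    (forall z, Q z -> z = 1 -> False)].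
  apply: exists_prime.
  - split; first by exists 0; rewrite rmorph0 mul0r.
    + by move=> u v [a1 E1] [a2 E2]; exists (a1 + a2); rewrite !rmorphD /= mulrDl E1 E2.
    + by move=> a u [a1 E1]; exists (a * a1); rewrite !rmorphM /= -mulrA E1.
  - by split => // u v -> ->; rewrite mulr1.
  - by move=> z Dz E; apply: nx; move: Dz; rewrite /D E rmorph1 mul1r.
have [s [nQs Ds]] := H Q QP.
by apply: nQs; apply: DQ.
Qed.

Lemma key {A : idomainType} (B : {fraction A} -> Prop) :
  krull_dim_one A -> overring B -> fg_algebra B -> flat_over B ->
  well_centered B -> forall b, B b ->
  exists al be : A, [/\ al != 0, B (al%:F)^-1 & b = be%:F / al%:F].
Proof.
move=> dim [SB HA] [s [sB sgen]] Hf Hw b Bb.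
have [r [rP r1]] := family Hf SB sB.
have [n [d [d0 Ed]]] := frac_repr b.
pose hs := map fst r.
have [N [N0 HN]] := uniformN dim d0 hs.
have [g [gdiv gQ]] := g_exists N0 HN.
have E0 : 1 = 0 + \sum_(p <- r) p.1%:F * p.2 by rewrite add0r.
have [c' [r' [_ r'P r'1]]] :=
  powseq N SB HA (erefl hs) (fun p pin => (rP p pin).1) (B0 SB) E0.
pose y := g%:F / d%:F.
have dF : d%:F != 0 by rewrite tofrac_eq0.
have By : B y.
  have -> : y = \sum_(p <- r') (y * p.1%:F ^+ N) * p.2.
    rewrite -[y in LHS]mulr1 {1}r'1 mul0r add0r mulr_sumr.
    by apply: eq_bigr => p _; rewrite mulrA.
  apply: (Bsum SB) => p pin; have [hin Bp] := r'P p pin.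
  have [q Eq] := gdiv _ hin.
  have -> : y * p.1%:F ^+ N = q%:F.
    by rewrite /y -rmorphXn mulrAC -rmorphM Eq rmorphM /= mulrAC divff // mul1r.
  by apply: (BM SB).
have [u [[Bu [v [Bv uv]]] [a Ea]]] := Hw y By.
have u0 : u != 0 by apply: contra_eq_neq uv => ->; rewrite mul0r eq_sym oner_neq0.
have Eg : g%:F * u = a%:F * d%:F.
  by rewrite -Ea /y -!mulrA mulVf // mulr1 mulrC.
have Hloc : forall x, B x -> inA (g%:F * x) -> inA x.
  move=> x Bx Hgx; apply: local_global => Q QP.
  case: (classic (exists h, h \in hs /\ ~ Q h)) => [[h [hin nQh]]|nall].
    have [p pin Ep] := mapP hin.
    have [_ pS] := rP p pin.
    have Hs : forall z, z \in s -> inA (h%:F * z) by rewrite Ep.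
    have [N' HN'] := loc_fg sgen Hs Bx.
    by exists (h ^+ N'); split => //; exact: prime_pow.
  exists g; split => //; apply: gQ => // h hin; apply: NNPP => nQh; apply: nall.
  by exists h.
have [al Eal] : inA u by apply: Hloc => //; exists (a * d); rewrite rmorphM Eg.
have [be Ebe] : inA (u * b).
  apply: Hloc; first exact: (BM SB).
  by exists (a * n); rewrite rmorphM /= -Ed mulrA Eg; ring.
exists al, be; split.
- by rewrite -tofrac_eq0 -Eal.
- rewrite -Eal; have -> : u^-1 = v by rewrite -[u^-1]mulr1 -uv mulKf.
  exact: Bv.
- by rewrite -Eal -Ebe mulrAC divff // mul1r.
Qed.

Theorem theorem4p22 (A : idomainType) (B : {fraction A} -> Prop) :
  krull_dim_one A -> overring B -> fg_algebra B -> flat_over B ->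
  well_centered B -> is_localization B.
Proof.
move=> dim Ho fg Hf Hw.
have [SB HA] := Ho.
exists (fun s => s != 0 /\ B (s%:F)^-1); split.
  split.
  - by split; [exact: oner_neq0 | rewrite rmorph1 invr1; case: SB].
  - move=> s t [s0 Bs] [t0 Bt]; split; first by rewrite mulf_neq0.
    by rewrite rmorphM invfM; exact: (BM SB).
  - by move=> s [].
move=> x; split.
- move=> Bx; have [al [be [al0 Bal E]]] := key dim Ho fg Hf Hw Bx.
  by exists be, al.
- by move=> [a [s [[s0 Bs] ->]]]; apply: (BM SB).
Qed.
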